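(* Let $n\ge3$ and let $G$ be a connected graph with at least two vertices, and assume it is not the case that both $G\cong K_2$ and $n=3$. Then $G\times K_n$ is super edge connected if and only if $n\,\kappa'(G)>\delta(G)$.
   Context: All graphs are finite, simple and undirected. $\kappa'(G)$ denotes edge connectivity and $\delta(G)$ minimum degree. The direct product $G\times H$ has vertex set $V(G)\times V(H)$. Two vertices $(x,u),(y,v)$ are adjacent if and only if $xy\in E(G)$ and $uv\in E(H)$. A minimum edge cut of a graph is a set of edges whose removal disconnects the graph and whose cardinality equals its edge connectivity. A graph is super edge connected if every minimum edge cut is the set of all edges incident with some single vertex. *)

(* Defs.v *)
From HB Require Import structures.
From mathcomp Require Import all_boot.
Set Implicit Arguments. Unset Strict Implicit. Unset Printing Implicit Defensive.

Definition simple_graph (T : finType) (e : rel T) : Prop :=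
  symmetric e /\ irreflexive e.

Definition connected (T : finType) (e : rel T) : Prop :=
  forall x y : T, connect e x y.

Definition edges (T : finType) (e : rel T) : {set {set T}} :=
  [set [set p.1; p.2] | p in [set p : T * T | e p.1 p.2]].

Definition remove_edges (T : finType) (e : rel T) (F : {set {set T}}) : rel T :=
  fun x y => e x y && ([set x; y] \notin F).

Definition edge_cut (T : finType) (e : rel T) (F : {set {set T}}) : Prop :=
  F \subset edges e /\ ~ connected (remove_edges e F).

Definition edge_conn (T : finType) (e : rel T) : nat :=
  \big[minn/#|edges e|]_(F : {set {set T}} |
       (F \subset edges e) && [exists x, exists y, ~~ connect (remove_edges e F) x y])
     #|F|.

Definition deg (T : finType) (e : rel T) (v : T) : nat := #|[set w | e v w]|.
Definition min_deg (T : finType) (e : rel T) : nat :=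
  \big[minn/#|T|]_(v : T) deg e v.

Definition min_edge_cut (T : finType) (e : rel T) (F : {set {set T}}) : Prop :=
  edge_cut e F /\ #|F| = edge_conn e.

Definition incident (T : finType) (e : rel T) (v : T) : {set {set T}} :=
  [set [set v; w] | w in [set w | e v w]].

Definition super_edge_connected (T : finType) (e : rel T) : Prop :=
  forall F, min_edge_cut e F -> exists v, F = incident e v.

Definition complete (n : nat) : rel 'I_n := fun i j => i != j.

Definition direct_prod (T U : finType) (e : rel T) (f : rel U) : rel (T * U) :=
  fun p q => e p.1 q.1 && f p.2 q.2.

Definition graph_iso (T U : finType) (e : rel T) (f : rel U) : Prop :=
  exists g : T -> U, bijective g /\ forall x y, f (g x) (g y) = e x y.
Arguments complete n : clear implicits.

(* Main.v *)
Require Import Defs.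
From Stdlib Require Import Lia ZArith.

Open Scope Z_scope.
Lemma ar2z n a b a' b' p q : 4 <= n -> 1 <= a -> 1 <= a' -> 1 <= b -> 1 <= b' -> a + a' = n -> b + b' = n ->
  0 <= p -> 0 <= q -> p <= a -> p <= b' -> q <= b -> q <= a' -> n + p + q <= a*b' + a'*b.
Proof. intros.
destruct (Z.le_gt_cases a b'); destruct (Z.le_gt_cases a' b).
- assert (b = a') by lia. assert (b' = a) by lia. subst b b'.
  pose proof (Z.square_nonneg (a-2)). pose proof (Z.square_nonneg (a'-2)). nia.
- set (k := b' - a). assert (E1 : b' = a + k) by lia. assert (E2 : a' = b + k) by lia.
  assert (1 <= k) by lia. rewrite E1, E2.
  assert (0 <= k*(a+b-2)) by (apply Z.mul_nonneg_nonneg; lia).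
  pose proof (Z.square_nonneg (a-1)). pose proof (Z.square_nonneg (b-1)).
  assert (D : a + b = 2 \/ 3 <= a + b) by lia. destruct D; nia.
- set (k := a - b'). assert (E1 : a = b' + k) by lia. assert (E2 : b = a' + k) by lia.
  assert (1 <= k) by lia. rewrite E1, E2.
  assert (0 <= k*(a'+b'-2)) by (apply Z.mul_nonneg_nonneg; lia).
  pose proof (Z.square_nonneg (a'-1)). pose proof (Z.square_nonneg (b'-1)).
  assert (D : a' + b' = 2 \/ 3 <= a' + b') by lia. destruct D; nia.
- lia.
Qed.
Lemma ar1z n a b a' b' p q : 3 <= n -> 1 <= a -> 1 <= a' -> 0 <= b -> 0 <= b' -> a + a' = n -> b + b' = n ->
  0 <= p -> 0 <= q -> p <= a -> p <= b' -> q <= b -> q <= a' -> n - 1 + p + q <= a*b' + a'*b.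
Proof. intros.
assert (Db : b = 0 \/ 1 <= b) by lia. assert (Db' : b' = 0 \/ 1 <= b') by lia.
destruct Db as [Hb|Hb]; [subst b; assert (0 <= (a-1)*(b'-1)) by (apply Z.mul_nonneg_nonneg; lia); nia|].
destruct Db' as [Hb'|Hb']; [subst b'; assert (0 <= (a'-1)*(b-1)) by (apply Z.mul_nonneg_nonneg; lia); nia|].
destruct (Z.le_gt_cases a b'); destruct (Z.le_gt_cases a' b).
- assert (b = a') by lia. assert (b' = a) by lia. subst b b'.
  pose proof (Z.square_nonneg (a-1)). pose proof (Z.square_nonneg (a'-1)).
  assert (D : 2 <= a \/ 2 <= a') by lia. destruct D.
  + assert (1 <= (a-1)*(a-1)) by nia. nia.
  + assert (1 <= (a'-1)*(a'-1)) by nia. nia.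
- set (k := b' - a). assert (E1 : b' = a + k) by lia. assert (E2 : a' = b + k) by lia.
  assert (1 <= k) by lia. rewrite E1, E2.
  assert (0 <= k*(a+b-2)) by (apply Z.mul_nonneg_nonneg; lia).
  pose proof (Z.square_nonneg (a-1)). pose proof (Z.square_nonneg (b-1)). nia.
- set (k := a - b'). assert (E1 : a = b' + k) by lia. assert (E2 : b = a' + k) by lia.
  assert (1 <= k) by lia. rewrite E1, E2.
  assert (0 <= k*(a'+b'-2)) by (apply Z.mul_nonneg_nonneg; lia).
  pose proof (Z.square_nonneg (a'-1)). pose proof (Z.square_nonneg (b'-1)). nia.
- lia.
Qed.
Close Scope Z_scope.
Lemma ar1 n a b a' b' p q : (3 <= n -> 1 <= a -> 1 <= a' -> a + a' = n -> b + b' = n ->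
  p <= a -> p <= b' -> q <= b -> q <= a' -> Nat.pred n + p + q <= a*b' + a'*b)%nat.
Proof. intros.
pose proof (ar1z (Z.of_nat n) (Z.of_nat a) (Z.of_nat b) (Z.of_nat a') (Z.of_nat b') (Z.of_nat p) (Z.of_nat q)).
lia. Qed.
Lemma ar2 n a b a' b' p q : (4 <= n -> 1 <= a -> 1 <= a' -> 1 <= b -> 1 <= b' -> a + a' = n -> b + b' = n ->
  p <= a -> p <= b' -> q <= b -> q <= a' -> n + p + q <= a*b' + a'*b)%nat.
Proof. intros.
pose proof (ar2z (Z.of_nat n) (Z.of_nat a) (Z.of_nat b) (Z.of_nat a') (Z.of_nat b') (Z.of_nat p) (Z.of_nat q)).
lia. Qed.


From HB Require Import structures.
From mathcomp Require Import all_boot.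
Set Implicit Arguments. Unset Strict Implicit. Unset Printing Implicit Defensive.


HB.instance Definition _ := SemiGroup.isComLaw.Build nat minn minnA minnC.
Lemma bigmin_le (I : finType) (P : pred I) (F : I -> nat) x j :
  P j -> \big[minn/x]_(i | P i) F i <= F j.
Proof. move=> Pj; rewrite (bigD1 j) //=; exact: geq_minl. Qed.

Section Gen.
Variable W : finType.
Variable r : rel W.

Definition cpairs (S : {set W}) : {set W * W} :=
  [set p : W * W | r p.1 p.2 && (p.1 \in S) && (p.2 \notin S)].
Definition bnd (S : {set W}) : {set {set W}} :=
  [set [set p.1; p.2] | p in cpairs S].

Lemma card_bnd (S : {set W}) : #|bnd S| = #|cpairs S|.
Proof.
apply: card_in_imset => [[a b] [c d]]; rewrite !inE /= => /andP[/andP[_ aS] bS] /andP[/andP[_ cS] dS] E.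
have ha : a \in [set c; d] by rewrite -E set21.
have hb : b \in [set c; d] by rewrite -E set22.
case/set2P: ha => [ac|ad]; last by subst; rewrite aS in dS.
case/set2P: hb => [bc|bd]; first by subst; rewrite cS in bS.
by subst.
Qed.

Lemma bnd_sub (S : {set W}) : bnd S \subset edges r.
Proof.
apply: imsetS; apply/subsetP => p; rewrite !inE => /andP[/andP[-> _] _] //.
Qed.

Lemma bnd_disc (S : {set W}) (x y : W) : x \in S -> y \notin S ->
  ~~ connect (remove_edges r (bnd S)) x y.
Proof.
move=> xS yS; apply/negP => /connectP[p hp ey].
suff : last x p \in S by rewrite -ey (negbTE yS).
elim: p x xS hp {ey} => [|z p IH] w wS //= /andP[hwz hp].
apply: IH hp; move: hwz; rewrite /remove_edges => /andP[rwz nb].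
apply/negPn/negP => zS; move/negP: nb; apply.
apply/imsetP; exists (w, z) => //; by rewrite !inE /= rwz wS zS.
Qed.

Lemma cut_bnd (F : {set {set W}}) (x y : W) : ~~ connect (remove_edges r F) x y ->
  let S := [set z | connect (remove_edges r F) x z] in
  [/\ x \in S, y \notin S & bnd S \subset F].
Proof.
move=> nc S; split; first by rewrite inE connect0.
  by rewrite inE.
apply/subsetP => E /imsetP[[a b]]; rewrite !inE /= => /andP[/andP[rab ca] ncb] ->.
apply/negPn/negP => nF; move/negP: ncb; apply.
apply: connect_trans ca (connect1 _); rewrite /remove_edges rab nF.
done.
Qed.

Lemma bnd_compl (S : {set W}) : symmetric r -> bnd (~: S) = bnd S.
Proof.
move=> sr; apply/eqP; rewrite eqEsubset; apply/andP; split;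
  apply/subsetP => E /imsetP[[a b]]; rewrite !inE /= => /andP[/andP[rab aS] bS] ->;
  apply/imsetP; exists (b, a) => /=; try exact: setUC.
- by rewrite !inE /= sr rab aS andbT; move: bS; rewrite negbK.
- by rewrite !inE /= sr rab aS bS.
Qed.

Lemma cpairs1 (v : W) : irreflexive r -> cpairs [set v] = (pair v) @: [set w | r v w].
Proof.
move=> ir; apply/setP => [[a b]]; rewrite !inE /=; apply/idP/imsetP.
  move=> /andP[/andP[rab /eqP E] bv]; subst a; exists b; rewrite ?inE //.
move=> [w]; rewrite inE => rvw [-> ->]; rewrite rvw eqxx /=.
by apply/negP => /eqP E; subst; rewrite ir in rvw.
Qed.

Lemma bnd1 (v : W) : irreflexive r -> bnd [set v] = incident r v.
Proof.
move=> ir; rewrite /bnd cpairs1 // /incident -imset_comp.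
by apply: eq_imset => w.
Qed.

Lemma card_bnd1 (v : W) : irreflexive r -> #|bnd [set v]| = #|[set w | r v w]|.
Proof.
move=> ir; rewrite card_bnd cpairs1 // card_imset // => a b [] //.
Qed.

Lemma ec_le (F : {set {set W}}) (x y : W) : F \subset edges r -> ~~ connect (remove_edges r F) x y ->
  edge_conn r <= #|F|.
Proof.
move=> sF nc; rewrite /edge_conn; apply: bigmin_le.
rewrite sF /=; apply/existsP; exists x; apply/existsP; exists y; exact: nc.
Qed.

Lemma ec_attained (x y : W) : ~~ connect (remove_edges r (edges r)) x y ->
  exists F : {set {set W}}, [/\ F \subset edges r, (exists x' y', ~~ connect (remove_edges r F) x' y')
    & #|F| = edge_conn r].
Proof.
move=> nc.
pose K v := v = #|edges r| \/ exists F : {set {set W}}, [/\ F \subset edges r,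
   (exists x' y', ~~ connect (remove_edges r F) x' y') & #|F| = v].
have : K (edge_conn r).
  rewrite /edge_conn; apply: big_ind; first by left.
    move=> a b Ka Kb; rewrite /minn; by case: ifP.
  move=> F /andP[sF /existsP[x' /existsP[y' h]]]; right; exists F; split => //.
  by exists x', y'.
case=> [->|//]; exists (edges r); split => //; by exists x, y.
Qed.
End Gen.


Lemma card_sumb (I : finType) (A : {set I}) : #|A| = \sum_i ((i \in A) : nat).
Proof. rewrite -sum1_card big_mkcond; apply: eq_bigr => i _; by case: (i \in A). Qed.

Lemma card_pairs (I J : finType) (b : I -> J -> bool) :
  #|[set p : I * J | b p.1 p.2]| = \sum_i \sum_j (b i j : nat).
Proof.
rewrite card_sumb pair_bigA; apply: eq_bigr => -[i j] _; by rewrite inE.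
Qed.

Definition fcnt (n : nat) (A B : {set 'I_n}) : nat :=
  #|[set ij : 'I_n * 'I_n | (ij.1 != ij.2) && ((ij.1 \in A) != (ij.2 \in B))]|.

Section Fcnt.
Variable n : nat.
Implicit Types A B : {set 'I_n}.

Lemma fcnt_sum A B : fcnt A B =
  \sum_i \sum_j (((i != j) && ((i \in A) != (j \in B))) : nat).
Proof. exact: (card_pairs (fun i j => (i != j) && ((i \in A) != (j \in B)))). Qed.


Lemma fcntC A B : fcnt A B = fcnt B A.
Proof.
rewrite !fcnt_sum exchange_big; apply: eq_bigr => i _; apply: eq_bigr => j _.
by rewrite eq_sym; congr (nat_of_bool (_ && _)); case: (i \in B); case: (j \in A).
Qed.

Lemma fcnt_compl A B : fcnt (~: A) (~: B) = fcnt A B.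
Proof.
rewrite !fcnt_sum; apply: eq_bigr => i _; apply: eq_bigr => j _.
by rewrite !inE; case: (i \in A); case: (j \in B).
Qed.

Lemma fcnt_formula A B :
  fcnt A B + (#|A :\: B| + #|B :\: A|) = #|A| * #|~: B| + #|~: A| * #|B|.
Proof.
have E1 : #|A :\: B| + #|B :\: A| = \sum_i \sum_j ((i == j) && ((i \in A) != (j \in B)) : nat).
  rewrite !card_sumb -big_split /=; apply: eq_bigr => i _.
  rewrite (bigD1 i) //= eqxx big1 /=; last by move=> j /negbTE; rewrite eq_sym => ->.
  by rewrite !inE addn0; case: (i \in A); case: (i \in B).
have E2 : #|A| * #|~: B| + #|~: A| * #|B| = \sum_i \sum_j (((i \in A) != (j \in B)) : nat).
  rewrite !card_sumb !big_distrl /= -big_split /=; apply: eq_bigr => i _.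
  rewrite !big_distrr -big_split /=; apply: eq_bigr => j _.
  by rewrite !inE; case: (i \in A); case: (j \in B).
rewrite E1 E2 fcnt_sum -big_split /=; apply: eq_bigr => i _.
rewrite -big_split /=; apply: eq_bigr => j _.
by case: (i == j); case: ((i \in A) != (j \in B)).
Qed.


Lemma cardsC_n A : #|A| + #|~: A| = n.
Proof. by rewrite cardsC card_ord. Qed.

Lemma partial_card A : A != set0 -> A != setT -> 0 < #|A| /\ 0 < #|~: A|.
Proof.
move=> h0 hT; split; first by rewrite card_gt0.
have := proper_card (A := A) (B := setT); rewrite properT hT cardsT card_ord => /(_ isT).
move=> lt; have E := cardsC_n A; rewrite lt0n; apply/eqP => e0.
by rewrite e0 addn0 in E; rewrite E ltnn in lt.
Qed.

Lemma fcnt_ge A B : 3 <= n -> A != set0 -> A != setT -> n.-1 <= fcnt A B.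
Proof.
move=> n3 h0 hT; have [ha ha'] := partial_card h0 hT.
have F := fcnt_formula A B.
have H : n.-1 + #|A :\: B| + #|B :\: A| <= #|A| * #|~: B| + #|~: A| * #|B|.
  apply/leP; apply: ar1; try apply/leP => //.
  - exact: (cardsC_n A).
  - exact: (cardsC_n B).
  - exact: subset_leq_card (subsetDl _ _).
  - by apply: subset_leq_card; rewrite setDE subsetIr.
  - exact: subset_leq_card (subsetDl _ _).
  - by apply: subset_leq_card; rewrite setDE subsetIr.
by rewrite -F -addnA leq_add2r in H.
Qed.

Lemma fcnt_ge2 A B : 4 <= n -> A != set0 -> A != setT -> B != set0 -> B != setT ->
  n <= fcnt A B.
Proof.
move=> n4 h0 hT g0 gT; have [ha ha'] := partial_card h0 hT.
have [hb hb'] := partial_card g0 gT.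
have F := fcnt_formula A B.
have H : n + #|A :\: B| + #|B :\: A| <= #|A| * #|~: B| + #|~: A| * #|B|.
  apply/leP; apply: ar2; try apply/leP => //.
  - exact: (cardsC_n A).
  - exact: (cardsC_n B).
  - exact: subset_leq_card (subsetDl _ _).
  - by apply: subset_leq_card; rewrite setDE subsetIr.
  - exact: subset_leq_card (subsetDl _ _).
  - by apply: subset_leq_card; rewrite setDE subsetIr.
by rewrite -F -addnA leq_add2r in H.
Qed.

Lemma fcnt_set0 A : fcnt A set0 = #|A| * n.-1.
Proof.
have F := fcnt_formula A set0.
rewrite setD0 set0D cards0 setC0 cardsT card_ord muln0 addn0 addn0 in F.
by rewrite -subn1 mulnBr muln1 -F addnK.
Qed.

Lemma fcnt_setT A : fcnt A setT = #|~: A| * n.-1.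
Proof. by rewrite -fcnt_compl setCT fcnt_set0. Qed.

Lemma fcnt_eq0 A B : 3 <= n -> fcnt A B = 0 ->
  (A = set0 /\ B = set0) \/ (A = setT /\ B = setT).
Proof.
move=> n3 h.
have n1 : 0 < n.-1 by rewrite -subn1 subn_gt0; apply: leq_trans n3.
have [eA0|nA0] := eqVneq A set0.
  left; split=> //; move: h; rewrite eA0 fcntC fcnt_set0 => /eqP.
  by rewrite muln_eq0 (gtn_eqF n1) orbF cards_eq0 => /eqP.
have [eAT|nAT] := eqVneq A setT.
  right; split=> //; move: h; rewrite eAT fcntC fcnt_setT => /eqP.
  rewrite muln_eq0 (gtn_eqF n1) orbF cards_eq0 => /eqP hB.
  by rewrite -(setCK B) hB setC0.
have := fcnt_ge B n3 nA0 nAT; rewrite h => /(leq_trans n1).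
by rewrite ltnn.
Qed.

End Fcnt.


Lemma sum_pair (I J : finType) (G : I * J -> nat) :
  \sum_(u : I * J) G u = \sum_x \sum_i G (x, i).
Proof. by rewrite pair_bigA; apply: eq_bigr => -[]. Qed.

Lemma sum_eq_le (I : finType) (E1 E2 : I -> nat) :
  (forall i, E1 i <= E2 i) -> \sum_i E2 i <= \sum_i E1 i -> forall i, E1 i = E2 i.
Proof.
move=> H H2 i.
have [_ hc] := leqif_sum (P := predT) (C := fun i => E1 i == E2 i) (fun i _ => leqif_eq (H i)).
have : \sum_i E1 i == \sum_i E2 i by rewrite eqn_leq H2 andbT; apply: leq_sum => j _; exact: H.
by rewrite hc => /forallP /(_ i) /eqP.
Qed.

Lemma min_deg_le (T : finType) (e : rel T) v : min_deg e <= deg e v.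
Proof. exact: bigmin_le. Qed.

Lemma deg_sum (T : finType) (e : rel T) v : deg e v = \sum_y (e v y : nat).
Proof. by rewrite /deg (card_sumb [set w | e v w]); apply: eq_bigr => y _; rewrite inE. Qed.

Section Prod.
Variables (T : finType) (e : rel T) (n : nat).
Hypothesis e_sym : symmetric e.
Hypothesis eirr : irreflexive e.

Definition Pr := direct_prod e (complete n).
Definition fib (S : {set T * 'I_n}) (x : T) : {set 'I_n} := [set i | (x, i) \in S].

Lemma Pr_sym : symmetric Pr.
Proof. by move=> [x i] [y j]; rewrite /Pr /direct_prod /complete /= e_sym eq_sym. Qed.

Lemma Pr_irr : irreflexive Pr.
Proof. by move=> [x i]; rewrite /Pr /direct_prod /= eirr. Qed.

Lemma fibC S x : fib (~: S) x = ~: fib S x.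
Proof. by apply/setP => i; rewrite !inE. Qed.

Lemma key_identity S :
  2 * #|cpairs Pr S| = \sum_x \sum_y e x y * fcnt (fib S x) (fib S y).
Proof.
have E1 : #|cpairs Pr (~: S)| = #|cpairs Pr S|.
  by rewrite -!card_bnd bnd_compl //; exact: Pr_sym.
rewrite mul2n -addnn -{1}E1.
have E2 : #|cpairs Pr (~: S)| + #|cpairs Pr S| =
   \sum_u \sum_v ((Pr u v && ((u \in S) != (v \in S))) : nat).
  rewrite /cpairs.
  rewrite (card_pairs (fun u v => Pr u v && (u \in ~: S) && (v \notin ~: S))).
  rewrite (card_pairs (fun u v => Pr u v && (u \in S) && (v \notin S))).
  rewrite -big_split /=; apply: eq_bigr => u _; rewrite -big_split /=; apply: eq_bigr => v _.
  by rewrite !inE; case: (Pr u v); case: (u \in S); case: (v \in S).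
rewrite E2 sum_pair; apply: eq_bigr => x _.
under eq_bigr do rewrite sum_pair.
rewrite exchange_big /=; apply: eq_bigr => y _.
rewrite fcnt_sum big_distrr /=; apply: eq_bigr => i _.
rewrite big_distrr /=; apply: eq_bigr => j _.
rewrite /Pr /direct_prod /complete /= !inE.
by case: (e x y); rewrite ?mul1n ?mul0n.
Qed.

Section Split.
Variable S : {set T * 'I_n}.
Let h x y := e x y * fcnt (fib S x) (fib S y).

Lemma split_sum x0 : \sum_x \sum_y h x y =
  2 * \sum_y h x0 y + \sum_(x | x != x0) \sum_(y | y != x0) h x y.
Proof.
have h00 : h x0 x0 = 0 by rewrite /h eirr.
have hs : forall x y, h x y = h y x by move=> x y; rewrite /h e_sym fcntC.
rewrite (bigD1 x0) //= mul2n -addnn -addnA; congr (_ + _).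
have -> : \sum_(x | x != x0) \sum_y h x y =
   \sum_(x | x != x0) (h x x0 + \sum_(y | y != x0) h x y).
  by apply: eq_bigr => x _; rewrite (bigD1 x0).
rewrite big_split /=; congr (_ + _).
rewrite [RHS](bigD1 x0) //= h00 add0n; apply: eq_bigr => x _; exact: hs.
Qed.

Lemma Q_ge x0 : 3 <= n -> fib S x0 != set0 -> fib S x0 != setT ->
  n.-1 * deg e x0 <= \sum_y h x0 y.
Proof.
move=> n3 h0 hT; rewrite deg_sum big_distrr /=; apply: leq_sum => y _.
rewrite /h; case: (e x0 y); rewrite ?muln0 ?mul0n // muln1 mul1n.
exact: fcnt_ge.
Qed.

Lemma facts x0 : 3 <= n -> fib S x0 != set0 -> fib S x0 != setT ->
  #|cpairs Pr S| <= n.-1 * min_deg e ->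
  [/\ deg e x0 = min_deg e,
      (forall y, e x0 y -> fcnt (fib S x0) (fib S y) = n.-1) &
      (forall x y, x != x0 -> y != x0 -> e x y -> fcnt (fib S x) (fib S y) = 0)].
Proof.
move=> n3 h0 hT hN.
have n1 : 0 < n.-1 by case: n n3 => [|[|[|m]]].
have K := key_identity S; rewrite -/h (split_sum x0) in K.
set Q := \sum_y h x0 y in K; set R := \sum_(x | x != x0) _ in K.
have HQ : n.-1 * deg e x0 <= Q by exact: Q_ge.
have Hd : n.-1 * min_deg e <= n.-1 * deg e x0 by rewrite leq_pmul2l // min_deg_le.
have H1 : 2 * #|cpairs Pr S| <= 2 * Q.
  rewrite leq_pmul2l //; apply: leq_trans hN (leq_trans Hd HQ).
have H2 : 2 * Q + R <= 2 * Q := leq_trans (eq_leq (esym K)) H1.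
have R0 : R = 0 by apply/eqP; rewrite -leqn0 -(leq_add2l (2 * Q)) addn0.
have H3 : 2 * #|cpairs Pr S| <= 2 * (n.-1 * min_deg e) by rewrite leq_pmul2l.
have H4 : 2 * Q + R <= 2 * (n.-1 * min_deg e) := leq_trans (eq_leq (esym K)) H3.
have HQ2 : Q <= n.-1 * min_deg e.
  by rewrite -(leq_pmul2l (isT : 0 < 2)); apply: leq_trans H4; exact: leq_addr.
split.
- apply/eqP; rewrite eq_sym -(eqn_pmul2l n1) eqn_leq Hd /=.
  exact: leq_trans HQ HQ2.
- move=> y exy.
  have T1 : forall z, (e x0 z : nat) * n.-1 <= h x0 z.
    move=> z; rewrite /h; case: (e x0 z); rewrite ?mul0n // !mul1n; exact: fcnt_ge.
  have T2 : \sum_z h x0 z <= \sum_z (e x0 z : nat) * n.-1.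
    rewrite -/Q; apply: leq_trans HQ2 _; rewrite -big_distrl /= -deg_sum [X in _ <= X]mulnC.
    exact: Hd.
  have := sum_eq_le T1 T2 y; rewrite /h exy !mul1n => ->; done.
- move=> x y hx hy exy.
  move/eqP: R0; rewrite /R sum_nat_eq0 => /forallP /(_ x); rewrite hx /= sum_nat_eq0.
  move=> /forallP /(_ y); rewrite hy /= /h exy mul1n => /eqP //.
Qed.

End Split.
End Prod.


Definition partial (n : nat) (A : {set 'I_n}) := (A != set0) && (A != setT).

Section Contra.
Variables (T : finType) (e : rel T) (n : nat).
Hypothesis e_sym : symmetric e.
Hypothesis eirr : irreflexive e.
Hypothesis conn : connected e.
Hypothesis T2 : 2 <= #|T|.
Hypothesis n3 : 3 <= n.

Definition Facts (S : {set T * 'I_n}) (x0 : T) : Prop :=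
  [/\ deg e x0 = min_deg e,
      (forall y, e x0 y -> fcnt (fib S x0) (fib S y) = n.-1) &
      (forall x y, x != x0 -> y != x0 -> e x y -> fcnt (fib S x) (fib S y) = 0)].

Lemma n1 : 0 < n.-1.
Proof. by rewrite -subn1 subn_gt0; apply: leq_trans n3. Qed.

Lemma Facts_compl S x0 : Facts S x0 -> Facts (~: S) x0.
Proof.
move=> [h1 h2 h3]; split => //.
  by move=> y ey; rewrite !fibC fcnt_compl; exact: h2.
by move=> x y hx hy exy; rewrite !fibC fcnt_compl; exact: h3.
Qed.

Lemma partial_compl (A : {set 'I_n}) : partial (~: A) = partial A.
Proof.
have E1 : (~: A == set0) = (A == setT) by rewrite -setCT (inj_eq (@setC_inj _)).
have E2 : (~: A == setT) = (A == set0) by rewrite -setC0 (inj_eq (@setC_inj _)).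
by rewrite /partial E1 E2 andbC.
Qed.

Lemma nonpartial (A : {set 'I_n}) : ~~ partial A -> A = set0 \/ A = setT.
Proof. by rewrite /partial negb_and !negbK => /orP[/eqP|/eqP]; [left|right]. Qed.

Lemma neq_of_e x y : e x y -> x != y.
Proof. by apply: contraTneq => ->; rewrite eirr. Qed.

Lemma leaf S x0 y : Facts S x0 -> e x0 y -> partial (fib S y) ->
  forall z, e y z -> z = x0.
Proof.
move=> [_ _ h3] ey py z eyz; apply/eqP/negPn/negP => zx.
have yx : y != x0 by rewrite eq_sym neq_of_e.
have := fcnt_eq0 n3 (h3 _ _ yx zx eyz).
by move: py; rewrite /partial => /andP[/negPf a /negPf b] [[/eqP]|[/eqP]]; rewrite ?a ?b.
Qed.

Lemma leaf_deg S x0 y : Facts S x0 -> e x0 y -> partial (fib S y) -> min_deg e <= 1.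
Proof.
move=> F ey py; apply: leq_trans (min_deg_le e y) _.
rewrite /deg -(cards1 x0); apply: subset_leq_card; apply/subsetP => z.
by rewrite !inE => /(leaf F ey py) ->.
Qed.

Lemma phi S x0 : Facts S x0 -> forall z, z = x0 \/ (e x0 z /\ partial (fib S z)) \/
  (exists y, [/\ e x0 y, ~~ partial (fib S y) & fib S z = fib S y]).
Proof.
move=> F z; have [_ _ h3] := F.
have step : forall w z, w = x0 \/ (e x0 w /\ partial (fib S w)) \/
  (exists y, [/\ e x0 y, ~~ partial (fib S y) & fib S w = fib S y]) -> e w z ->
  z = x0 \/ (e x0 z /\ partial (fib S z)) \/
  (exists y, [/\ e x0 y, ~~ partial (fib S y) & fib S z = fib S y]).
  move=> w z' Hw ewz.
  have [->|zx] := eqVneq z' x0; first by left.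
  have [wx|wx] := eqVneq w x0.
    subst w; right; case: (boolP (partial (fib S z'))) => pz; first by left.
    by right; exists z'; split.
  have := fcnt_eq0 n3 (h3 _ _ wx zx ewz) => Hf.
  have npw : ~~ partial (fib S w).
    by case: Hf => -[-> _]; rewrite /partial ?eqxx ?andbF.
  have ewz' : fib S z' = fib S w by case: Hf => -[-> ->].
  case: Hw => [/eqP|[[_ pw]|[y [ey npy eq]]]]; first by rewrite (negbTE wx).
    by rewrite pw in npw.
  by right; right; exists y; split => //; rewrite ewz'.
pose Phi v := v = x0 \/ (e x0 v /\ partial (fib S v)) \/
  (exists y, [/\ e x0 y, ~~ partial (fib S y) & fib S v = fib S y]).
have gen : forall p w, Phi w -> path e w p -> Phi (last w p).
  elim => [|a p IH] w //= Hw /andP[ewa hp].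
  apply: IH hp; exact: step Hw ewa.
have := conn x0 z => /connectP[p hp ->].
apply: gen hp; by left.
Qed.

Lemma deg_ge2 x y1 y2 : e x y1 -> e x y2 -> y1 != y2 -> 1 < deg e x.
Proof. by move=> h1 h2 ne; apply/card_gt1P; exists y1, y2; rewrite !inE h1 h2. Qed.

Lemma caseEmpty S x0 : Facts S x0 -> partial (fib S x0) ->
  (exists y0, e x0 y0 /\ fib S y0 = set0) -> #|S| <= 1.
Proof.
move=> F hp [y0 [ey0 fy0]]; have [hd hb hc] := F.
set A := fib S x0.
have a1 : #|A| = 1.
  have := hb y0 ey0; rewrite fy0 fcnt_set0 => E.
  by apply/eqP; rewrite -(eqn_pmul2r n1) mul1n E.
have nofull : forall y, e x0 y -> fib S y != setT.
  move=> y ey; apply/negP => /eqP fT.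
  have := hb y ey; rewrite fT fcnt_setT => E.
  have c1 : #|~: A| = 1 by apply/eqP; rewrite -(eqn_pmul2r n1) mul1n E.
  have := cardsC_n A; rewrite a1 c1 => n2.
  by move: n3; rewrite -n2.
have nopart : forall y, e x0 y -> ~~ partial (fib S y).
  move=> y ey; apply/negP => py.
  have := leaf_deg F ey py; rewrite -hd => d1.
  have : 1 < deg e x0.
    apply: (deg_ge2 ey0 ey); apply/negP => /eqP E; subst y.
    by move: py; rewrite /partial fy0 eqxx.
  by rewrite ltnNge d1.
have all0 : forall z, z != x0 -> fib S z = set0.
  move=> z zx; case: (phi F z) => [/eqP|[[ez pz]|[y [ey npy ->]]]].
  - by rewrite (negbTE zx).
  - by rewrite (negbTE (nopart z ez)) in pz.
  - by case: (nonpartial npy) => // fT; move: (nofull y ey); rewrite fT eqxx.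
have sub : S \subset (pair x0) @: A.
  apply/subsetP => -[z i] zS.
  have [zx|zx] := eqVneq z x0.
    by subst z; apply/imsetP; exists i => //; rewrite inE.
  have : i \in fib S z by rewrite inE.
  by rewrite all0 // inE.
by rewrite -a1; apply: leq_trans (subset_leq_card sub) (leq_imset_card _ _).
Qed.

Hypothesis niso : ~ (graph_iso e (complete 2) /\ n = 3).

Lemma main_partial S x0 : Facts S x0 -> partial (fib S x0) ->
  2 <= #|S| -> 2 <= #|~: S| -> False.
Proof.
move=> F hp S2 C2; have [hd hb hc] := F.
case: (boolP [exists y, e x0 y && (fib S y == set0)]).
  move=> /existsP[y0 /andP[ey0 /eqP f0]].
  have := caseEmpty F hp (ex_intro _ y0 (conj ey0 f0)).
  by rewrite leqNgt S2.
move=> no0.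
case: (boolP [exists y, e x0 y && (fib S y == setT)]).
  move=> /existsP[y0 /andP[ey0 /eqP fT]].
  have F' := Facts_compl F.
  have hp' : partial (fib (~: S) x0) by rewrite fibC partial_compl.
  have f0 : fib (~: S) y0 = set0 by rewrite fibC fT setCT.
  have := caseEmpty F' hp' (ex_intro _ y0 (conj ey0 f0)).
  by rewrite leqNgt C2.
move=> noT.
have nbp : forall y, e x0 y -> partial (fib S y).
  move=> y ey; rewrite /partial; apply/andP; split.
    by apply/negP => /eqP E; move/existsP: no0; apply; exists y; rewrite ey E eqxx.
  by apply/negP => /eqP E; move/existsP: noT; apply; exists y; rewrite ey E eqxx.
have nophi3 : forall z, ~ (exists y, [/\ e x0 y, ~~ partial (fib S y) & fib S z = fib S y]).
  by move=> z [y [ey npy _]]; rewrite nbp in npy.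
have [y1 y1x] : exists y1, y1 != x0.
  have := T2; move/card_gt1P => [a [b [_ _ ab]]].
  have [ax|ax] := eqVneq a x0; last by exists a.
  by exists b; rewrite -ax eq_sym.
have [ey1 py1] : e x0 y1 /\ partial (fib S y1).
  case: (phi F y1) => [/eqP|[//|/nophi3 //]]; by rewrite (negbTE y1x).
have d1 : deg e x0 <= 1 by rewrite hd; exact: leaf_deg F ey1 py1.
have allz : forall z, z = x0 \/ z = y1.
  move=> z; case: (phi F z) => [->|[[ez _]|/nophi3 //]]; first by left.
  right; apply/eqP/negPn/negP => zy.
  by have := deg_ge2 ez ey1 zy; rewrite ltnNge d1.
have fc := hb y1 ey1.
have neq3 : n = 3.
  apply/eqP; rewrite eqn_leq n3 andbT leqNgt; apply/negP => n4.
  move: hp py1; rewrite /partial => /andP[a0 aT] /andP[b0 bT].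
  have := fcnt_ge2 n4 a0 aT b0 bT; rewrite fc.
  by case: (n) n4 => [|m] //; rewrite ltnn.
apply: niso; split => //.
pose g (z : T) : 'I_2 := if z == x0 then ord0 else ord_max.
pose h (i : 'I_2) : T := if i == ord0 then x0 else y1.
exists g; split.
  exists h.
    move=> z; have [->|zx] := eqVneq z x0; first by rewrite /h /g !eqxx.
    rewrite /h /g (negbTE zx) /=.
    by case: (allz z) => E; [rewrite E eqxx in zx | rewrite E].
  move=> i; have [->|i0] := eqVneq i ord0; first by rewrite /h /g !eqxx.
  rewrite /h (negbTE i0) /g (negbTE y1x); apply: val_inj => /=.
  by move: i0; case: i => -[|[|]] //=.
have gx : g x0 = ord0 by rewrite /g eqxx.
have gy : g y1 = ord_max by rewrite /g (negbTE y1x).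
move=> a b; case: (allz a) => ->; case: (allz b) => ->;
  rewrite ?gx ?gy /complete ?eirr ?ey1 //; last by rewrite e_sym ey1.
Qed.

End Contra.


Section Gen2.
Variable W : finType.
Variable r : rel W.

Lemma mem_bnd (S : {set W}) a b : symmetric r ->
  ([set a; b] \in bnd r S) = r a b && ((a \in S) != (b \in S)).
Proof.
move=> sr; apply/imsetP/andP.
  move=> [[c d]]; rewrite inE /= => /andP[/andP[rcd cS] dS] E.
  have ha : a \in [set c; d] by rewrite -E set21.
  have hb : b \in [set c; d] by rewrite -E set22.
  have hc : c \in [set a; b] by rewrite E set21.
  have hd : d \in [set a; b] by rewrite E set22.
  case/set2P: hc => Hc; case/set2P: hd => Hd; subst c d.
  - by rewrite cS in dS.
  - by rewrite rcd cS (negbTE dS).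
  - by rewrite sr rcd cS (negbTE dS).
  - by rewrite cS in dS.
move=> [rab]; case: (boolP (a \in S)) => aS /= bS.
  by exists (a, b); rewrite // inE /= rab aS; move: bS; case: (b \in S).
exists (b, a); last exact: setUC.
by rewrite inE /= sr rab aS andbT; move: bS; case: (b \in S).
Qed.

Lemma edges_cut (x y : W) : x != y -> ~~ connect (remove_edges r (edges r)) x y.
Proof.
move=> xy; apply/negP => /connectP[[|a p] hp ey]; first by rewrite ey eqxx in xy.
move: hp => /= /andP[h _]; move: h; rewrite /remove_edges => /andP[rxa /negP]; apply.
by apply/imsetP; exists (x, a); rewrite // inE.
Qed.

Lemma has_nbr : (forall x y, connect r x y) -> forall x y : W, x != y -> exists z, r x z.
Proof.
move=> c x y xy; have := c x y => /connectP[[|a p] hp ey]; first by rewrite ey eqxx in xy.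
by exists a; case/andP: hp.
Qed.

Lemma not_conn_ex (R : rel W) : ~ (forall x y, connect R x y) ->
  exists x y, ~~ connect R x y.
Proof.
move=> nc.
have : ~~ [forall x, forall y, connect R x y].
  apply/negP => /forallP H; apply: nc => x y; exact: (forallP (H x)).
rewrite negb_forall => /existsP[x]; rewrite negb_forall => /existsP[y h].
by exists x, y.
Qed.

End Gen2.

Lemma third (n : nat) (j k : 'I_n) : 3 <= n -> exists l, (l != j) && (l != k).
Proof.
move=> n3; case: (boolP [exists l, (l != j) && (l != k)]) => [/existsP //|H].
have : #|[set: 'I_n]| <= #|[set j; k]|.
  apply: subset_leq_card; apply/subsetP => l _; rewrite !inE.
  apply/negPn/negP; rewrite negb_or => hl; move/negP: H; apply.
  by apply/existsP; exists l.
rewrite cardsT card_ord cards2 => h.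
have := leq_trans n3 h; by case: (j != k).
Qed.

Lemma deg_attained (T : finType) (e : rel T) : irreflexive e -> 0 < #|T| ->
  exists x, deg e x = min_deg e.
Proof.
move=> ir T0.
pose K v := v = #|T| \/ exists x, deg e x = v.
have : K (min_deg e).
  rewrite /min_deg; apply: big_ind; first by left.
    by move=> a b Ka Kb; rewrite /minn; case: ifP.
  by move=> x _; right; exists x.
case=> [E|//]; have [x _] : exists x, x \in T by apply/card_gt0P.
exfalso; have := min_deg_le e x; rewrite E /deg => H.
have : #|[set w | e x w]| <= #|[set~ x]|.
  apply: subset_leq_card; apply/subsetP => w; rewrite !inE => exw.
  by apply/negP => /eqP E'; subst w; rewrite ir in exw.
rewrite cardsC1 => H2; have := leq_trans H H2.
by case: #|T| T0 => [|m] //; rewrite ltnn.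
Qed.

Section Prod2.
Variables (T : finType) (e : rel T) (n : nat).

Lemma deg_Pr (x : T) (i : 'I_n) : deg (@Pr T e n) (x, i) = deg e x * n.-1.
Proof.
rewrite /deg.
have -> : [set w | Pr e (x, i) w] = setX [set y | e x y] [set~ i].
  apply/setP => -[y j]; rewrite !inE /Pr /direct_prod /complete /= eq_sym //.
by rewrite cardsX cardsC1 card_ord.
Qed.

Lemma card_D : #|[set ij : 'I_n * 'I_n | ij.1 != ij.2]| = n * n.-1.
Proof.
rewrite (card_pairs (fun i j : 'I_n => i != j)).
have -> : \sum_(i : 'I_n) \sum_(j : 'I_n) ((i != j) : nat) = \sum_(i : 'I_n) n.-1.
  apply: eq_bigr => i _; have := cardsC1 i; rewrite card_ord => <-; rewrite (card_sumb [set~ i]).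
  by apply: eq_bigr => j _; rewrite !inE eq_sym.
by rewrite sum_nat_const card_ord.
Qed.

Lemma lift_card (X : {set T}) :
  #|cpairs (@Pr T e n) [set u : T * 'I_n | u.1 \in X]| = #|cpairs e X| * (n * n.-1).
Proof.
rewrite -card_D -cardsX.
pose f (p : (T * T) * ('I_n * 'I_n)) := ((p.1.1, p.2.1), (p.1.2, p.2.2)).
have fi : injective f by move=> [[a b] [c d]] [[a' b'] [c' d']] [-> -> -> ->].
rewrite -(card_imset _ fi).
suff -> : cpairs (@Pr T e n) [set u : T * 'I_n | u.1 \in X] =
   f @: setX (cpairs e X) [set ij : 'I_n * 'I_n | ij.1 != ij.2] by [].
apply/setP => -[[x i] [y j]]; rewrite !inE /Pr /direct_prod /complete /=.
apply/idP/imsetP.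
  move=> /andP[/andP[/andP[exy ij] xX] yX].
  by exists ((x, y), (i, j)); rewrite // !inE /= exy xX yX ij.
move=> [[[a b] [c d]]]; rewrite !inE /= => /andP[/andP[/andP[eab aX] bX] cd].
by rewrite /f /= => -[-> -> -> ->]; rewrite eab cd aX bX.
Qed.

End Prod2.


Section Main.
Variables (T : finType) (e : rel T) (n : nat).
Hypothesis e_sym : symmetric e.
Hypothesis eirr : irreflexive e.
Hypothesis conn : connected e.
Hypothesis T2 : 2 <= #|T|.
Hypothesis n3 : 3 <= n.
Hypothesis niso : ~ (graph_iso e (complete 2) /\ n = 3).
Hypothesis hk : min_deg e < n * edge_conn e.

Lemma lower (S : {set T * 'I_n}) : 2 <= #|S| -> 2 <= #|~: S| ->
  n.-1 * min_deg e < #|cpairs (@Pr T e n) S|.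
Proof.
move=> S2 C2; rewrite ltnNge; apply/negP => hN.
case: (boolP [exists x, partial (fib S x)]) => [/existsP[x0 px0]|nop].
  have [a0 aT] : fib S x0 != set0 /\ fib S x0 != setT by move/andP: px0.
  have F := facts e_sym eirr n3 a0 aT hN.
  exact: (main_partial e_sym eirr conn T2 n3 niso (S := S) (x0 := x0) F px0 S2 C2).
have np : forall x, fib S x = set0 \/ fib S x = setT.
  move=> x; apply: nonpartial; apply/negP => px; move/negP: nop; apply.
  by apply/existsP; exists x.
pose X := [set x | fib S x == setT].
have SX : S = [set u : T * 'I_n | u.1 \in X].
  apply/setP => -[x i]; rewrite !inE /=.
  case: (np x) => E; rewrite E ?eqxx.
    have : i \notin fib S x by rewrite E inE.
    rewrite inE => /negbTE ->; apply/esym/negbTE/negP => /eqP E'.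
    by have := in_setT i; rewrite -E' inE.
  have : i \in fib S x by rewrite E inE.
  by rewrite inE => ->.
have [u Su] : exists u, u \in S by apply/card_gt0P; apply: leq_trans S2.
have [v Cv] : exists v, v \in ~: S by apply/card_gt0P; apply: leq_trans C2.
have uX : u.1 \in X by move: Su; rewrite {1}SX inE.
have vX : v.1 \notin X by move: Cv; rewrite inE {1}SX inE.
have kle : edge_conn e <= #|bnd e X| := ec_le (bnd_sub e X) (bnd_disc e uX vX).
rewrite SX lift_card -card_bnd in hN.
have n1 : 0 < n.-1 by rewrite -subn1 subn_gt0; apply: leq_trans n3.
have : n.-1 * min_deg e < n.-1 * (n * #|bnd e X|).
  rewrite ltn_pmul2l //; apply: leq_trans hk _; rewrite leq_pmul2l //.
  by apply: leq_trans n3.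
have E : #|bnd e X| * (n * n.-1) = n.-1 * (n * #|bnd e X|).
  by rewrite mulnCA [RHS]mulnCA [#|bnd e X| * _]mulnC.
by rewrite -E ltnNge hN.
Qed.

End Main.


Section Final.
Variables (T : finType) (e : rel T) (n : nat).
Hypothesis e_sym : symmetric e.
Hypothesis eirr : irreflexive e.
Hypothesis n3 : 3 <= n.

Let P := @Pr T e n.
Lemma Psym : symmetric P. Proof. exact: Pr_sym. Qed.
Lemma Pirr : irreflexive P. Proof. exact: Pr_irr. Qed.

Lemma card_inc (v : T * 'I_n) : #|incident P v| = deg e v.1 * n.-1.
Proof.
rewrite -(bnd1 _ Pirr) (card_bnd1 _ Pirr); case: v => x i; exact: deg_Pr.
Qed.

Lemma finish F (v w : T * 'I_n) : min_edge_cut P F -> bnd P [set v] \subset F ->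
  w \notin [set v] -> F = incident P v.
Proof.
move=> [[sF _] cF] sub wv.
have k := ec_le (bnd_sub P [set v]) (bnd_disc P (set11 v) wv).
apply/esym/eqP; rewrite -(bnd1 _ Pirr) eqEcard sub /= cF //.
Qed.

End Final.

Theorem corollary2 (T : finType) (e : rel T) (n : nat) :
  simple_graph e -> connected e -> 2 <= #|T| -> 3 <= n ->
  ~ (graph_iso e (complete 2) /\ n = 3) ->
  (super_edge_connected (direct_prod e (complete n))
   <-> min_deg e < n * edge_conn e).
Proof.
move=> [esym eirr] conn T2 n3 niso.
change (super_edge_connected (@Pr T e n) <-> min_deg e < n * edge_conn e).
have n1 : 0 < n.-1 by rewrite -subn1 subn_gt0; apply: leq_trans n3.
have n0 : 0 < n by apply: leq_trans n3.
pose i0 : 'I_n := Ordinal n0.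
have Psym : symmetric (@Pr T e n) := Pr_sym esym.
have Pirr : irreflexive (@Pr T e n) := Pr_irr eirr.
have [x [y [_ _ xy]]] : exists x y : T, [/\ x \in T, y \in T & x != y] by apply/card_gt1P.
split.
- move=> sup; rewrite ltnNge; apply/negP => hk'.
  have [F0 [sF0 [x' [y' nc0]] cF0]] := ec_attained (edges_cut e xy).
  have [x'X y'X sub0] := cut_bnd nc0.
  set X := [set z | connect _ x' z] in x'X y'X sub0.
  set SX := [set u : T * 'I_n | u.1 \in X].
  have cF1 : #|bnd (@Pr T e n) SX| <= n.-1 * min_deg e.
    rewrite card_bnd lift_card -card_bnd.
    apply: (@leq_trans (edge_conn e * (n * n.-1))).
      by rewrite leq_pmul2r ?muln_gt0 ?n0 ?n1 // -cF0 subset_leq_card.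
    by rewrite mulnA [edge_conn e * n]mulnC mulnC leq_pmul2l.
  have u1 : (x', i0) \in SX by rewrite inE.
  have u2 : (y', i0) \notin SX by rewrite inE.
  have k1 := ec_le (bnd_sub _ SX) (bnd_disc _ u1 u2).
  have xy' : (x', i0) != (y', i0) by apply/negP => /eqP E; rewrite -E u1 in u2.
  have [F [sF [a [b ncF]] cF]] := ec_attained (edges_cut (@Pr T e n) xy').
  have mF : min_edge_cut (@Pr T e n) F.
    split => //; split => // hc; by move/negP: ncF; apply; exact: hc a b.
  have [v Fv] := sup F mF.
  have cFv : min_deg e * n.-1 <= #|F|.
    by rewrite Fv card_inc // leq_pmul2r // min_deg_le.
  have eq1 : #|bnd (@Pr T e n) SX| = edge_conn (@Pr T e n).
    apply/eqP; rewrite eqn_leq k1 andbT -cF; apply: leq_trans cF1 _.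
    by rewrite mulnC.
  have mF1 : min_edge_cut (@Pr T e n) (bnd (@Pr T e n) SX).
    split => //; split; first exact: bnd_sub.
    by move=> hc; move: (bnd_disc (@Pr T e n) u1 u2); rewrite hc.
  have [w Fw] := sup _ mF1; case: w Fw => y0 j Fw.
  have [y1 y1y0] : exists y1, y1 != y0.
    have [E|ne] := eqVneq x y0; last by exists x.
    by exists y; rewrite -E eq_sym.
  have [z ez] := has_nbr conn (x := y0) (y := y1) ltac:(by rewrite eq_sym).
  have [k /andP[kj _]] := third j j n3.
  have [l /andP[lj lk]] := third j k n3.
  have E1 : [set (y0, j); (z, k)] \in bnd (@Pr T e n) SX.
    rewrite Fw; apply/imsetP; exists (z, k) => //.
    by rewrite inE /Pr /direct_prod /complete /= ez eq_sym kj.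
  move: E1; rewrite mem_bnd // => /andP[_ cross].
  have E2 : [set (y0, l); (z, k)] \in bnd (@Pr T e n) SX.
    rewrite mem_bnd //; apply/andP; split.
      by rewrite /Pr /direct_prod /complete /= ez lk.
    by move: cross; rewrite !inE.
  move: E2; rewrite Fw => /imsetP[u _ Eu].
  have : (y0, j) \in [set (y0, l); (z, k)] by rewrite Eu set21.
  case/set2P => -[].
    by move=> E; rewrite E eqxx in lj.
  by move=> _ E; rewrite E eqxx in kj.
- move=> hk F mF.
  have [[sF ncF] cF] := mF.
  have [a [b nc]] := not_conn_ex ncF.
  have [aS bS sub] := cut_bnd nc.
  set S := [set z | connect _ a z] in aS bS sub.
  have [x0 dx0] := deg_attained eirr (ltnW T2).
  have [i1 /andP[i10 _]] := third i0 i0 n3.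
  have w1 : (x0, i1) \notin [set (x0, i0)].
    by rewrite inE; apply/negP => /eqP [E]; rewrite E eqxx in i10.
  have kP : edge_conn (@Pr T e n) <= n.-1 * min_deg e.
    apply: leq_trans (ec_le (bnd_sub _ _) (bnd_disc _ (set11 (x0, i0)) w1)) _.
    by rewrite (bnd1 _ Pirr) card_inc //= dx0 mulnC.
  case: (leqP 2 #|S|) => S2; [case: (leqP 2 #|~: S|) => C2|].
  + have L := lower esym eirr conn T2 n3 niso hk S2 C2.
    have : #|bnd (@Pr T e n) S| <= n.-1 * min_deg e.
      by apply: leq_trans (subset_leq_card sub) _; rewrite cF.
    by rewrite card_bnd leqNgt L.
  + have [c Sc] : exists c, ~: S = [set c].
      apply/cards1P; rewrite eqn_leq -ltnS C2 card_gt0; apply/set0Pn; exists b.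
      by rewrite inE.
    exists c; apply: (finish eirr mF (w := a)).
      by rewrite -Sc bnd_compl.
    by rewrite -Sc inE negbK.
  + have [c Sc] : exists c, S = [set c].
      by apply/cards1P; rewrite eqn_leq -ltnS S2 card_gt0; apply/set0Pn; exists a.
    exists c; apply: (finish eirr mF (w := b)).
      by rewrite -Sc.
    by rewrite -Sc.
Qed.
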